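(* For all $c\in\mathbb{N}^+$ with $c>1$, as $n\to\infty$, $$\sup\left\{\frac{|f|_{\mathcal{C}}}{|f|_{\mathcal{U}^c}}: f\in H^n,\ |f|_{\mathcal{U}^c}<+\infty\right\}\in\Omega(n\log n).$$
   Context: Let $\mathcal{B}=\{0,1\}$, let $\mathcal{B}^*$ be the set of finite binary strings and $|h|$ the length of $h\in\mathcal{B}^*$. For $n\in\mathbb{N}^+$, $H^n$ is the set of all functions $\mathcal{B}^n\to\mathcal{B}$. An interpreter is a Turing machine computing a partial function $\varphi:\mathcal{B}^*\times\mathcal{B}^*\to\mathcal{B}\cup\{\bot\}$, where $\bot$ denotes non-halting (or invalid) output. For $f\in H^n$, $|f|_\varphi=\min\{|h|:\varphi(h,x)=f(x)\ \forall x\in\mathcal{B}^n\}$ ($+\infty$ if no such $h$). Turing machines have alphabet $\{0,1,b\}$ ($b$ blank), a finite state set containing an initial state and two final states accept/reject; the output is $1$ if halting in accept, $0$ if halting in reject, $\bot$ otherwise; multi-tape machines have read-only input tapes and read/write work tapes, and the transition function is a finite list of rules. $E(T)$ is a fixed prefix-free binary encoding of a machine $T$ listing its rules (of length at least 2 for every machine). For $c\in\mathbb{N}^+$, $\mathcal{U}^c$ is a time-bounded universal interpreter (a 2-input-tape, 3-work-tape machine): on $(p,x)$ with $n=|x|$, it checks within $n^c$ steps whether $p=E(T)u$ for a two-input-tape machine $T$ and $u\in\mathcal{B}^*$ (outputting $\bot$ if not, or if the check does not finish), then simulates $T$ on $(u,x)$ with an efficient universal simulation (Hennie–Stearns, overhead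 $O(t\log t)$ for $t$ simulated steps), devoting at most $n^c$ of its own steps to the simulation; it outputs $T$'s output if $T$ halts within this budget and $0$ otherwise. For fixed $p$ it runs in at most $\beta n^c$ steps for a constant $\beta$. In particular, if a Turing machine computes $g:\mathcal{B}^*\to\mathcal{B}$ in time $O(n^{c'})$ with $c'<c$, there is $h\in\mathcal{B}^*$ with $\mathcal{U}^c(h,x)=g(x)$ for all $x$ of sufficiently large length. A Boolean circuit on $n$ inputs is a DAG with a unique sink (output) whose sources are labelled by input indices in $\{1,\dots,n\}$ and whose other vertices (gates) are labelled AND, OR (two incoming edges) or NOT (one incoming edge); its size $|C|$ is its number of vertices. The circuit interpreter $\mathcal{C}$ reads a program $h=0^{\lceil\log_2 n\rceil}1\,[\text{binary expansion of } n]\,0^{|C|}1\,[\text{description of vertex } i]_{i=1}^{|C|}$, each vertex being described by its label and its parents/input index using $\max\{2\lceil\log_2|C|\rceil,\lceil\log_2 n\rceil\}$ bits beyond the label bits, so a circuit $C$ on $n$ inputs has encoding length $L(|C|,n)=2\lceil\log_2 n\rceil+2+|C|(3+\max\{2\lceil\log_2|C|\rceil,\lceil\log_2 n\rceil\})$; $\mathcal{C}(h,x)$ is the circuit's output on $x\in\mathcal{B}^n$, and $\bot$ if $h$ is malformed. Hence $|f|_{\mathcal{C}}=\min\{L(|C|,n): C \text{ computes } f\}$. *)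

(* Defs.v *)
From mathcomp Require Import all_boot.
From mathcomp Require Import boolp.

Set Implicit Arguments.
Unset Strict Implicit.
Unset Printing Implicit Defensive.

(* Classical minimum of a set of naturals: None = +infinity (empty).   *)
Lemma ex_asbool (P : nat -> Prop) : (exists k, P k) -> exists k, `[< P k >].
Proof. by case=> k Pk; exists k; apply/asboolP. Qed.

Definition minopt (P : nat -> Prop) : option nat :=
  match pselect (exists k, P k) with
  | left e => Some (ex_minn (ex_asbool e))
  | right _ => None
  end.

Definition interpreter := seq bool -> seq bool -> option bool.

Definition H (n : nat) := {ffun n.-tuple bool -> bool}.

Definition desc_compl (phi : interpreter) (n : nat) (f : H n) : option nat :=
  minopt (fun k => exists h : seq bool,
            size h = k /\ forall x : n.-tuple bool, phi h (tval x) = Some (f x)).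

(* States are 0..nstates-1; 0 = initial, 1 = accept, 2 = reject.       *)
Inductive sym := S0 | S1 | Sb.
Inductive move := ML | MR | MS.

Definition sym_of_bool (b : bool) := if b then S1 else S0.

Record TM := {
  tm_k : nat;                (* number of work tapes *)
  tm_nstates : nat;
  (* transition (finite list of rules seen as a partial function):
     state, input symbol, work-tape symbols  ->
     new state, input head move, (symbol written, move) per work tape *)
  tm_delta : nat -> sym -> seq sym -> option (nat * move * seq (sym * move))
}.

Definition TM_wf (M : TM) : Prop :=
  3 <= tm_nstates M /\
  forall q a ws q' mi wm, tm_delta M q a ws = Some (q', mi, wm) ->
    q' < tm_nstates M /\ size wm = tm_k M.

(* a two-way infinite work tape: (reversed left part, head symbol, right part) *)
Definition tape := (seq sym * sym * seq sym)%type.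

Definition tape_move (t : tape) (m : move) : tape :=
  let: (l, a, r) := t in
  match m with
  | MS => t
  | ML => match l with [::] => ([::], Sb, a :: r) | b :: l' => (l', b, a :: r) end
  | MR => match r with [::] => (a :: l, Sb, [::]) | b :: r' => (a :: l, b, r') end
  end.

Definition tape_write (t : tape) (s : sym) : tape :=
  let: (l, _, r) := t in (l, s, r).

Definition tape_head (t : tape) : sym := let: (_, a, _) := t in a.

(* configuration: state, input head position, work tapes *)
Definition config := (nat * nat * seq tape)%type.

Definition init_config (M : TM) : config := (0, 0, nseq (tm_k M) ([::], Sb, [::])).

(* input tape: x followed by blanks; the head cannot move left of cell 0 *)
Definition input_sym (x : seq bool) (pos : nat) : sym :=
  nth Sb (map sym_of_bool x) pos.

Definition move_input (pos : nat) (m : move) : nat :=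
  match m with ML => pos.-1 | MR => pos.+1 | MS => pos end.

(* one step; halted configurations (state 1 or 2) and configurations with
   no applicable rule are left unchanged (the latter never halt) *)
Definition step (M : TM) (x : seq bool) (cf : config) : config :=
  let: (q, pos, ts) := cf in
  if (q == 1) || (q == 2) then cf else
  match tm_delta M q (input_sym x pos) (map tape_head ts) with
  | None => cf
  | Some (q', mi, wm) =>
      (q', move_input pos mi,
       [seq tape_move (tape_write tw.1 tw.2.1) tw.2.2 | tw <- zip ts wm])
  end.

Definition run (M : TM) (x : seq bool) (t : nat) : config :=
  iter t (step M x) (init_config M).

Definition state_of (cf : config) : nat := let: (q, _, _) := cf in q.

Definition computes_in_time (M : TM) (g : seq bool -> bool) (T : nat -> nat) : Prop :=
  forall x : seq bool, exists t, t <= T (size x) /\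
    state_of (run M x t) = (if g x then 1 else 2).

(* The (only) property of the time-bounded universal interpreter U^c
   used in the context: every g computable in time O(n^c') with c' < c
   is computed by U^c with a fixed program on all inputs of large length. *)
Definition universal_property (c : nat) (U : interpreter) : Prop :=
  forall (c' : nat), c' < c ->
  forall (M : TM) (g : seq bool -> bool), TM_wf M ->
    (exists C : nat, computes_in_time M g (fun n => C * n ^ c' + C)) ->
    exists (h : seq bool) (N : nat), forall x : seq bool, N <= size x -> U h x = Some (g x).

(* Vertices listed in a topological order; parents are referred to by
   their (0-based) position in the list; input indices are 0-based
   (index j stands for the paper's input j+1).  The sink is the last
   vertex. *)
Inductive vertex := VIn of nat | VAnd of nat & nat | VOr of nat & nat | VNot of nat.

Definition parents (v : vertex) : seq nat :=
  match v with
  | VIn _ => [::]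
  | VAnd a b => [:: a; b]
  | VOr a b => [:: a; b]
  | VNot a => [:: a]
  end.

Definition circuit := seq vertex.

Definition wf_circuit (n : nat) (C : circuit) : Prop :=
  0 < size C /\
  (forall i, i < size C ->
     match nth (VIn 0) C i with
     | VIn j => j < n
     | v => all (fun a => a < i) (parents v)
     end) /\
  (* unique sink: every vertex other than the output has a child *)
  (forall i, i < (size C).-1 ->
     exists j, j < size C /\ i \in parents (nth (VIn 0) C j)).

Definition eval_vertex (x : seq bool) (vals : seq bool) (v : vertex) : bool :=
  match v with
  | VIn j => nth false x j
  | VAnd a b => nth false vals a && nth false vals b
  | VOr a b => nth false vals a || nth false vals b
  | VNot a => ~~ nth false vals a
  end.

Definition eval_circuit (C : circuit) (x : seq bool) : bool :=
  last false (foldl (fun vals v => rcons vals (eval_vertex x vals v)) [::] C).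

Definition circuit_computes (n : nat) (C : circuit) (f : H n) : Prop :=
  forall x : n.-tuple bool, eval_circuit C (tval x) = f x.

Definition clog2 (m : nat) : nat := up_log 2 m.

(* L(|C|, n): length of the encoding of a circuit of size s on n inputs *)
Definition Lenc (s n : nat) : nat :=
  2 * clog2 n + 2 + s * (3 + maxn (2 * clog2 s) (clog2 n)).

Definition circ_compl (n : nat) (f : H n) : option nat :=
  minopt (fun k => exists C : circuit,
            wf_circuit n C /\ circuit_computes C f /\ k = Lenc (size C) n).

(* Main.v *)
Require Import Defs.
From mathcomp Require Import all_boot.
From mathcomp Require Import boolp zify.

Lemma minoptP (P : nat -> Prop) : (exists k, P k) ->
  exists m, minopt P = Some m /\ P m /\ forall k, P k -> m <= k.
Proof.
move=> ex; rewrite /minopt; case: pselect => [e|//].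
case: ex_minnP => m /asboolP Pm mn; exists m; split=> //; split=> //.
by move=> k Pk; apply: mn; apply/asboolP.
Qed.

Definition andDelta (q : nat) (a : sym) (ws : seq sym) :
  option (nat * move * seq (sym * move)) :=
  if q == 0 then match a with
    | S1 => Some (0, MR, [::])
    | S0 => Some (2, MS, [::])
    | Sb => Some (1, MS, [::]) end
  else None.

Definition andTM : TM := {| tm_k := 0; tm_nstates := 3; tm_delta := andDelta |}.

Lemma andTM_wf : TM_wf andTM.
Proof.
split=> // q a ws q' mi wm; rewrite /= /andDelta.
by case: (q == 0) => //; case: a => -[<- _ <-].
Qed.

Lemma run_prefix (x : seq bool) i : i <= find negb x ->
  run andTM x i = (0, i, [::]).
Proof.
elim: i => [|i IH] Hi //.
rewrite /run iterS -/(run andTM x i) IH ?(ltnW Hi) //=.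
rewrite /input_sym.
have Hs : i < size x by apply: leq_trans Hi (find_size _ _).
rewrite (nth_map false) //.
have := before_find false Hi; rewrite /=; case: (nth false x i) => //= _.
Qed.

Lemma andTM_computes :
  computes_in_time andTM (fun x => all id x) (fun n => 1 * n ^ 1 + 1).
Proof.
move=> x; exists (find negb x).+1; split.
  by rewrite mul1n expn1 addn1 ltnS find_size.
rewrite /run iterS -/(run andTM x _) run_prefix //= /input_sym.
have Hhas := has_find negb x.
have Hall : all id x = ~~ has negb x.
  by clear; elim: x => //= b s ->; case: b.
case: (ltnP (find negb x) (size x)) => H1.
- rewrite (nth_map false) //.
  have Hh : has negb x by rewrite Hhas.
  have := nth_find false Hh.
  by case: nth => //; rewrite Hall Hh.
- have Hh : ~~ has negb x by rewrite Hhas -leqNgt.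
  have -> : find negb x = size x by apply/eqP; rewrite eqn_leq find_size.
  by rewrite nth_default ?size_map // Hall Hh.
Qed.

Definition key (n : nat) (v : vertex) : nat := if v is VIn i then i else n.

Lemma eval_indep (x x' : seq bool) j (C : circuit) vals :
  (forall i, i != j -> nth false x i = nth false x' i) ->
  all (fun v => key j.+1 v != j) C ->
  foldl (fun vals v => rcons vals (eval_vertex x vals v)) vals C =
  foldl (fun vals v => rcons vals (eval_vertex x' vals v)) vals C.
Proof.
move=> Hx; elim: C vals => [|v C IH] vals //= /andP [Hv HC].
rewrite IH //; congr (foldl _ (rcons _ _) _).
by case: v Hv => //= i Hi; apply: Hx; rewrite eq_sym.
Qed.

Lemma circ_lower n (C : circuit) :
  circuit_computes C [ffun x : n.-tuple bool => all id (tval x)] -> n <= size C.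
Proof.
move=> HC.
have sub : {subset iota 0 n <= map (key n) C}.
  move=> j; rewrite mem_iota add0n => /= Hj.
  apply/negPn/negP => Hnot.
  pose x := [tuple of nseq n true].
  pose x' := [tuple of map (fun i => i != j) (iota_tuple n 0)].
  have e1 := HC x; have e2 := HC x'.
  rewrite !ffunE /= all_nseq /= in e1.
  have : all id x' = false.
    apply/negbTE/allPn; exists false => //=.
    apply/mapP; exists j; [by rewrite mem_iota | by rewrite eqxx].
  rewrite /= => e3; rewrite ffunE /= e3 in e2.
  rewrite orbT in e1.
  move: e1; rewrite /eval_circuit (@eval_indep _ [seq i != j | i <- iota 0 n] j).
  - by rewrite -/(eval_circuit _ _) e2.
    move=> i Hij /=; rewrite nth_nseq.
    case: (ltnP i n) => Hi.
      by rewrite (nth_map 0) ?size_iota // nth_iota // add0n Hij.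
    by rewrite nth_default // size_map size_iota.
  clear -Hnot Hj; elim: C Hnot => //= v C IH.
  rewrite inE negb_or => /andP [H1 H2]; rewrite IH // andbT.
  by case: v H1 => //= *; lia.
have := uniq_leq_size (iota_uniq 0 n) sub.
by rewrite size_iota size_map.
Qed.


Definition cv (i : nat) : vertex :=
  if i == 0 then VIn 0 else if odd i then VIn (i./2).+1 else VAnd (i - 2) (i - 1).

Definition chain (m : nat) : circuit := mkseq cv m.*2.+1.

Lemma chain_eval (x : seq bool) m :
  size (foldl (fun vals v => rcons vals (eval_vertex x vals v)) [::] (chain m)) = m.*2.+1 /\
  last false (foldl (fun vals v => rcons vals (eval_vertex x vals v)) [::] (chain m))
    = all (fun i => nth false x i) (iota 0 m.+1).
Proof.
elim: m => [|m IH]; first by rewrite /= andbT.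
move: IH; set F := (fun vals v => _) => -[IH1 IH2].
have -> : chain m.+1 = chain m ++ [:: VIn m.+1; VAnd m.*2 m.*2.+1].
  rewrite /chain.
  have -> : m.+1.*2.+1 = m.*2.+1 + 2 by rewrite doubleS addn2.
  rewrite /mkseq iotaD map_cat.
  congr (_ ++ _); rewrite add0n /= /cv /= odd_double /= uphalf_double.
  by rewrite subn2 subn1.
rewrite foldl_cat; move: (foldl F [::] (chain m)) IH1 IH2 => V IH1 IH2.
rewrite (_ : iota 0 m.+2 = iota 0 m.+1 ++ [:: m.+1]); last by rewrite -addn1 iotaD.
rewrite all_cat -IH2.
rewrite [foldl _ _ _]/= /F /= !size_rcons IH1 last_rcons; split=> //.
rewrite !nth_rcons IH1 ltnSn ltnn eqxx.
by rewrite -nth_last IH1 /= andbT.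
Qed.

Lemma chain_wf m : wf_circuit m.+1 (chain m).
Proof.
rewrite /wf_circuit size_mkseq; split=> //; split.
- move=> i Hi; rewrite nth_mkseq // /cv.
  case: eqP => [_ //|Hi0].
  have := odd_double_half i; rewrite -!muln2 in Hi *.
  case: (odd i) => /= He; [lia|].
  rewrite !ltn_subLR; lia.
- move=> i Hi; rewrite /= -!muln2 in Hi.
  have := odd_double_half i; rewrite -!muln2.
  case Ho: (odd i) => /= He.
  + exists i.+1; split; first lia.
    rewrite nth_mkseq -?muln2; last lia.
    rewrite /cv /= Ho /= !inE; apply/orP; right; apply/eqP; lia.
  + exists i.+2; split; first lia.
    rewrite nth_mkseq -?muln2; last lia.
    rewrite /cv /= Ho /= !inE; apply/orP; left; apply/eqP; lia.
Qed.

Lemma chain_computes m :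
  circuit_computes (chain m) [ffun x : m.+1.-tuple bool => all id (tval x)].
Proof.
move=> x; rewrite ffunE /eval_circuit (chain_eval x m).2.
by rewrite -{2}(mkseq_nth false x) size_tuple /mkseq all_map.
Qed.

Lemma chain_ok n : 0 < n -> wf_circuit n (chain n.-1) /\
  circuit_computes (chain n.-1) [ffun x : n.-tuple bool => all id (tval x)].
Proof. case: n => // m _; split; [exact: chain_wf | exact: chain_computes]. Qed.

Lemma trunc_le_up n : trunc_log 2 n <= clog2 n.
Proof.
case: n => [|n]; first by rewrite /trunc_log.
rewrite -(@leq_exp2l 2) //; apply: leq_trans (trunc_logP _ _) (up_logP _ _) => //.
Qed.

Theorem mainTheorem12 (c : nat) (hc : 1 < c) (U : interpreter)
  (HU : universal_property c U) :
  exists K : nat, 0 < K /\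
  exists N : nat, forall n : nat, N <= n ->
    exists (f : H n) (u k : nat),
      desc_compl U f = Some u /\ circ_compl f = Some k /\
      n * trunc_log 2 n * u <= K * k.
Proof.
have [h [N0 HN]] := HU 1 hc andTM (fun x => all id x) andTM_wf
  (ex_intro _ 1 andTM_computes).
exists (size h).+1; split=> //; exists (maxn N0 1) => n Hn.
pose f := [ffun x : n.-tuple bool => all id (tval x)].
have Hh : forall x : n.-tuple bool, U h (tval x) = Some (f x).
  move=> x; rewrite ffunE; apply: HN; rewrite size_tuple; lia.
have Hex : exists k, exists h0 : seq bool, size h0 = k /\
    forall x : n.-tuple bool, U h0 (tval x) = Some (f x).
  by exists (size h), h.
have [u [Hu [_ Humin]]] := minoptP _ Hex.
have ule : u <= size h := Humin _ (ex_intro _ h (conj erefl Hh)).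
have Hcex : exists k, exists C : circuit,
    wf_circuit n C /\ circuit_computes C f /\ k = Lenc (size C) n.
  exists (Lenc (size (chain n.-1)) n), (chain n.-1).
  have Hn0 : 0 < n by lia.
  have [W1 W2] := chain_ok _ Hn0.
  by split=> //; split.
have [k [Hk [[C [HwC [HcC Ek]]] _]]] := minoptP _ Hcex.
exists f, u, k; split=> //; split=> //.
have HsC := circ_lower _ _ HcC.
have Ht := trunc_le_up n.
have A : n * trunc_log 2 n <= k.
  rewrite Ek /Lenc.
  apply: leq_trans (leq_addl _ _).
  apply: leq_mul => //.
  apply: leq_trans Ht _; apply: leq_trans (leq_maxr _ _) _; exact: leq_addl.
have B := leq_mul A ule.
nia.
Qed.
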